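(* Consider the following two-phase MIX communication protocol between a single receiver $R$ and $v$ senders, run over $(t+1)^2$ distinct MIX servers organised into $t+1$ pairwise disjoint blocks $B_1,\dots,B_{t+1}$, where $B_k=\{MIX_{k,1},\dots,MIX_{k,t+1}\}$ and $MIX_{k,1}$ is called the leader of $B_k$ (so every MIX server belongs to exactly one block and is used in exactly one mixing step). Private channels connect $R$ with each server of $B_1$, each server of $B_k$ with each server of $B_{k+1}$ ($k\le t$), and each server of $B_{t+1}$ with each sender. Phase A (receiver to senders). $R$ has one-time pads $\pi^1_1,\dots,\pi^1_v\in\mathbb{F}_{2^l}$. For each $i$, $R$ splits $\pi^1_i$ into $t+1$ shares $\pi^1_{i,1},\dots,\pi^1_{i,t+1}\in\mathbb{F}_{2^l}$ (uniformly random subject to their XOR being $\pi^1_i$) and privately sends $\pi^1_{i,j}$ to $MIX_{1,j}$. Then for $k=1,\dots,t+1$: the leader of $B_k$ chooses a uniformly random permutation $\rho_k\in S_v$ and tells it to all servers in $B_k$, who reindex their shares by $\pi^k_{i,j}:=\pi^k_{\rho_k(i),j}$; the leader of $B_k$ chooses uniformly random modifiers $\omega^k_{i,j}\in\mathbb{F}_{2^l}$ and privately sends $\omega^k_{i,j}$ to $MIX_{k,j}$; each $MIX_{k,j}$ computes $\pi^{k+1}_{i,j}=\omega^k_{i,j}+\pi^k_{i,j}$ (addition in $\mathbb{F}_{2^l}$, i.e. XOR) and, if $k\le t$, sends $\pi^{k+1}_{i,j}$ to $MIX_{k+1,j}$. Finally, denoting the shares held by $MIX_{t+1,j}$ by $\phi_{i,j}$,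 $MIX_{t+1,j}$ sends $\phi_{i,j}$ to the $i$-th sender, who XORs the $t+1$ received shares to obtain its (permuted and modified) pad. Phase B (senders to receiver). Each sender XORs its secret message with the pad it reconstructed and sends the result to the leader of $B_{t+1}$; the ciphertexts are then passed back from leader to leader ($B_{t+1}$ to $B_t$ to $\dots$ to $B_1$ to $R$), each leader of $B_k$ undoing its step by removing (XORing) the modifiers $\omega^k_i=\bigoplus_j\omega^k_{i,j}$ and applying the inverse permutation $\rho_k^{-1}$; $R$ recovers each message by XORing with the corresponding original pad. Suppose the adversary is passive (it only observes, never deviates from the protocol), computationally unbounded, and controls (sees the complete view of) at most $t$ MIX servers. Then this protocol is a perfectly reliable, perfectly private and perfectly anonymous message transmission protocol.
   Context: Perfectly reliable: every transmitted message is received by its intended recipient with probability 1. Perfectly private: for any coalition of at most $t$ corrupted parties, their probability of correctly determining any transmitted message (pad or sender's secret) is the same whether or not they are given their view of the protocol. Perfectly anonymous: for any coalition of at most $t$ corrupted parties, their probability of correctly determining which sender sent (respectively received) any given message is the same whether or not they are given their view of the protocol. *)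

(* Defs.v *)
From HB Require Import structures.
From mathcomp Require Import all_boot all_order all_algebra all_fingroup.
Set Implicit Arguments. Unset Strict Implicit. Unset Printing Implicit Defensive.
Import Order.TTheory GRing.Theory Num.Theory.
Local Open Scope ring_scope.

(* Blocks k : 'I_t.+1 (0-indexed: block k is B_{k+1}); a server is a pair
   (k, j) : 'I_t.+1 * 'I_t.+1, i.e. MIX_{k+1,j+1}; j = ord0 is the leader. *)
Notation server t := ('I_t.+1 * 'I_t.+1)%type.

(* All random choices of the (honest) parties:
   - pad  : R's one-time pads pi^1_i,
   - sh   : R's shares pi^1_{i,j} (constrained to XOR to the pad),
   - rho  : the permutation rho_k chosen by the leader of block k,
   - om   : the modifiers omega^k_{i,j} chosen by the leader of block k. *)
Notation coins F v t :=
  ({ffun 'I_v -> F} * {ffun 'I_v * 'I_t.+1 -> F} * {ffun 'I_t.+1 -> {perm 'I_v}}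
   * {ffun 'I_t.+1 * 'I_v * 'I_t.+1 -> F})%type.

Notation msgs F v := {ffun 'I_v -> F} (only parsing).

Definition pad {F : finFieldType} {v t : nat} (c : coins F v t) := c.1.1.1.
Definition sh {F : finFieldType} {v t : nat} (c : coins F v t) := c.1.1.2.
Definition rho {F : finFieldType} {v t : nat} (c : coins F v t) := c.1.2.
Definition om {F : finFieldType} {v t : nat} (c : coins F v t) := c.2.

(* R's shares are uniformly random subject to XOR-ing to the pad; the pads
   themselves are uniform: the coin space is uniform on consistent coins. *)
Definition consistent {F : finFieldType} {v t : nat} (c : coins F v t) : bool :=
  [forall i : 'I_v, \sum_(j < t.+1) sh c (i, j) == pad c i].

(* lvl c k i j = share pi^{k+1}_{i,j}: the share of index i held as input by
   MIX_{k+1,j+1} (k <= t); lvl c t.+1 i j = phi_{i,j} (held by the last block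
   after its step, sent to sender i). *)
Fixpoint lvl {F : finFieldType} {v t : nat} (c : coins F v t) (k : nat)
  : 'I_v -> 'I_t.+1 -> F :=
  if k is k'.+1 then
    fun i j => om c (inord k', i, j) + lvl c k' (rho c (inord k') i) j
  else fun i j => sh c (i, j).

(* origin c k i = index of R's original pad that lies at position i after
   the steps of blocks 1..k; sender i receives (a modification of) the pad
   of index origin c t.+1 i. *)
Fixpoint origin {F : finFieldType} {v t : nat} (c : coins F v t) (k : nat)
  (i : 'I_v) : 'I_v :=
  if k is k'.+1 then origin c k' (rho c (inord k') i) else i.

Definition sender_pad {F : finFieldType} {v t : nat} (c : coins F v t) (i : 'I_v) : F :=
  \sum_(j < t.+1) lvl c t.+1 i j.

(* Phase B: back c m n = vector of ciphertexts after the leaders of the last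
   n blocks undid their step; back c m 0 = the senders' ciphertexts (received
   by the leader of B_{t+1}); back c m (t - k) is received by the leader of
   block k (0-indexed); back c m t.+1 is received by R. *)
Fixpoint back {F : finFieldType} {v t : nat} (c : coins F v t) (m : msgs F v)
  (n : nat) : 'I_v -> F :=
  if n is n'.+1 then
    let k : 'I_t.+1 := inord (t - n') in
    fun p => back c m n' (((rho c k)^-1)%g p) + \sum_(j < t.+1) om c (k, ((rho c k)^-1)%g p, j)
  else fun i => m i + sender_pad c i.

Definition R_output {F : finFieldType} {v t : nat} (c : coins F v t) (m : msgs F v)
  (p : 'I_v) : F := back c m t.+1 p + pad c p.

(* Phase A view of server (k,j): received shares, rho_k (told by/chosen by the
   leader), its modifiers, and (for the leader) all modifiers it chose.  What it
   sends is a function of these data. *)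
Definition viewA_srv {F : finFieldType} {v t : nat} (c : coins F v t)
  (s : server t) :
  ({ffun 'I_v -> F} * {perm 'I_v} * {ffun 'I_v -> F}
   * option {ffun 'I_v * 'I_t.+1 -> F})%type :=
  (finfun (fun i => lvl c s.1 i s.2), rho c s.1,
   finfun (fun i => om c (s.1, i, s.2)),
   if s.2 == ord0 then Some (finfun (fun ij : 'I_v * 'I_t.+1 => om c (s.1, ij.1, ij.2)))
   else None).

Definition viewB_srv {F : finFieldType} {v t : nat} (c : coins F v t) (m : msgs F v)
  (s : server t) : option {ffun 'I_v -> F} :=
  if s.2 == ord0 then Some (finfun (back c m (t - s.1))) else None.

Definition viewA {F : finFieldType} {v t : nat} (C : {set server t})
  (m : msgs F v) (c : coins F v t) :=
  [ffun s : server t => if s \in C then Some (viewA_srv c s) else None].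

Definition viewFull {F : finFieldType} {v t : nat} (C : {set server t})
  (m : msgs F v) (c : coins F v t) :=
  [ffun s : server t => if s \in C then Some (viewA_srv c s, viewB_srv c m s) else None].

Definition is_dist {T : finType} (mu : {ffun T -> rat}) : Prop :=
  (forall x, 0 <= mu x) /\ \sum_x mu x = 1.

(* Probability of an event over the joint space (message ~ mu, independent of
   the protocol's coins, which are uniform on the consistent ones). *)
Definition Pr {F : finFieldType} {v t : nat} (mu : {ffun msgs F v -> rat})
  (E : msgs F v -> coins F v t -> bool) : rat :=
  \sum_(m : msgs F v) mu m *
    ((#|[set c : coins F v t | consistent c && E m c]|)%:R
     / (#|[set c : coins F v t | consistent c]|)%:R).

(* Optimal probability of correctly determining a quantity (a guess x is
   correct iff correct m c x) when given the view, resp. without it. *)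
Definition best_with {F : finFieldType} {v t : nat} {V X : finType}
  (mu : {ffun msgs F v -> rat}) (view : msgs F v -> coins F v t -> V)
  (correct : msgs F v -> coins F v t -> X -> bool) : rat :=
  \big[Num.max/0]_(g : {ffun V -> X}) Pr mu (fun m c => correct m c (g (view m c))).

Definition best_blind {F : finFieldType} {v t : nat} {X : finType}
  (mu : {ffun msgs F v -> rat})
  (correct : msgs F v -> coins F v t -> X -> bool) : rat :=
  \big[Num.max/0]_(x : X) Pr mu (fun m c => correct m c x).

(* Main.v *)
Require Import Defs.
From HB Require Import structures.
From mathcomp Require Import all_boot all_order all_algebra all_fingroup.
From mathcomp Require Import ring zify.
Import Order.TTheory GRing.Theory Num.Theory.
Local Open Scope ring_scope.

Set Implicit Arguments. Unset Strict Implicit. Unset Printing Implicit Defensive.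

Lemma cardS (T : finType) (b : pred T) : #|[set c | b c]| = (\sum_c (b c : nat))%N.
Proof. by rewrite -sum1_card big_mkcond; apply: eq_bigr => c _; rewrite inE; case: (b c). Qed.

Lemma card_part (T V : finType) (P : pred T) (view : T -> V) (Q : T -> V -> bool) :
  #|[set c | P c && Q c (view c)]| =
  (\sum_w #|[set c | P c && (view c == w) && Q c w]|)%N.
Proof.
rewrite cardS (eq_bigr (fun w => \sum_c (P c && (view c == w) && Q c w : nat))%N); last first.
  by move=> w _; rewrite cardS.
rewrite exchange_big; apply: eq_bigr => c _ /=.
rewrite (bigD1 (view c)) //= eqxx andbT big1 ?addn0 // => w /negbTE nw.
by rewrite eq_sym nw andbF.
Qed.

Lemma card_bij (T : finType) (f g : T -> T) (A B : pred T) :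
  cancel f g -> (forall c, B (f c) = A c) ->
  #|[set c | A c]| = #|[set c | B c]|.
Proof.
move=> fK hB; rewrite -[RHS](card_preimset _ (can_inj fK)); apply: eq_card => c.
by rewrite !inE hB.
Qed.

Lemma card_uniq (T X : finType) (P : pred T) (correct : T -> X -> bool) (tgt : T -> X) :
  (forall c, P c -> forall x, correct c x = (x == tgt c)) ->
  #|[set c | P c]| = (\sum_x #|[set c | P c && correct c x]|)%N.
Proof.
move=> hU; rewrite cardS (eq_bigr (fun x => \sum_c (P c && correct c x : nat))%N); last first.
  by move=> x _; rewrite cardS.
rewrite exchange_big; apply: eq_bigr => c _ /=.
case Pc: (P c) => /=; last by rewrite big1.
rewrite (bigD1 (tgt c)) //= hU // eqxx big1 ?addn0 // => x nx.
by rewrite hU // (negbTE nx).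
Qed.

Lemma sym_count (T V X : finType) (A : pred T) (view : T -> V) (correct : T -> X -> bool)
  (tgt : T -> X) :
  (forall c, A c -> forall x, correct c x = (x == tgt c)) ->
  (forall x y, exists f g : T -> T, cancel f g /\ (forall c, A (f c) = A c) /\
     (forall c, A c -> view (f c) = view c /\ correct (f c) y = correct c x)) ->
  forall w x,
  (#|[set c | A c && (view c == w) && correct c x]| * #|[set c | A c]| =
   #|[set c | A c && (view c == w)]| * #|[set c | A c && correct c x]|)%N.
Proof.
move=> hU hS.
have hK : forall w x y, #|[set c | A c && (view c == w) && correct c x]| =
                        #|[set c | A c && (view c == w) && correct c y]|.
  move=> w x y; have [f [g [fK [hA hV]]]] := hS x y.
  apply: (card_bij fK) => c; rewrite hA; case Ac: (A c) => //=.
  by have [-> ->] := hV c Ac.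
have hC : forall x y, #|[set c | A c && correct c x]| = #|[set c | A c && correct c y]|.
  move=> x y; have [f [g [fK [hA hV]]]] := hS x y.
  apply: (card_bij fK) => c; rewrite hA; case Ac: (A c) => //=.
  by have [_ ->] := hV c Ac.
move=> w x.
have e1 : #|[set c | A c]| = (#|X| * #|[set c | A c && correct c x]|)%N.
  rewrite (card_uniq hU) -sum_nat_const; apply: eq_bigr => y _; exact: hC.
have e2 : #|[set c | A c && (view c == w)]| =
          (#|X| * #|[set c | A c && (view c == w) && correct c x]|)%N.
  rewrite (@card_uniq _ _ (fun c => A c && (view c == w)) correct tgt); last first.
    by move=> c /andP[Ac _]; apply: hU.
  rewrite -sum_nat_const; apply: eq_bigr => y _; exact: hK.
by rewrite e1 e2 mulnCA mulnA.
Qed.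

Set Implicit Arguments. Unset Strict Implicit. Unset Printing Implicit Defensive.

Lemma bigmax_ub (I : finType) (f : I -> rat) (b : rat) :
  0 <= b -> (forall i, f i <= b) -> \big[Num.max/0]_i f i <= b.
Proof. by move=> b0 hb; elim/big_ind: _ => // x y hx hy; rewrite ge_max hx hy. Qed.

Lemma bigmax_lb (I : finType) (f : I -> rat) (i : I) : f i <= \big[Num.max/0]_i f i.
Proof. by rewrite (bigD1 i) //= le_max lexx. Qed.

Lemma bigmax_ge0 (I : finType) (f : I -> rat) : 0 <= \big[Num.max/0]_i f i.
Proof. by elim/big_rec: _ => // i x _ hx; rewrite le_max hx orbT. Qed.

Section Gen.
Variables (F : finFieldType) (v t : nat).
Notation coinsT := (coins F v t).
Notation msgsT := {ffun 'I_v -> F}.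
Let N := #|[set c : coinsT | consistent c]|.

Lemma N_gt0 : (0 < N)%N.
Proof.
rewrite /N card_gt0; apply/set0Pn.
exists ((([ffun => 0], [ffun => 0]), [ffun => 1%g]), [ffun => 0]); rewrite inE.
by apply/forallP => i; rewrite /sh /pad /= ffunE big1 // => j _; rewrite ffunE.
Qed.

Lemma Pr_ge0 (mu : {ffun msgsT -> rat}) (E : msgsT -> coinsT -> bool) : is_dist mu -> 0 <= Pr mu E.
Proof.
move=> [mu0 _]; apply: sumr_ge0 => m _; apply: mulr_ge0 => //.
by apply: divr_ge0; apply: ler0n.
Qed.

Lemma Pr_indep mu (E : coinsT -> bool) : is_dist mu ->
  Pr mu (fun _ c => E c) = #|[set c : coinsT | consistent c && E c]|%:R / N%:R.
Proof. by move=> [_ mu1]; rewrite /Pr -mulr_suml mu1 mul1r. Qed.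

Lemma best_eq (V X : finType) mu (view : msgsT -> coinsT -> V)
  (correct : msgsT -> coinsT -> X -> bool) (D : V -> nat) :
  is_dist mu ->
  (forall m w, #|[set c | consistent c && (view m c == w)]| = D w) ->
  (forall m w x, (#|[set c | consistent c && (view m c == w) && correct m c x]| * N =
                  D w * #|[set c | consistent c && correct m c x]|)%N) ->
  best_with mu view correct = best_blind mu correct.
Proof.
move=> hmu hD hW; have N0 : N%:R != 0 :> rat by rewrite pnatr_eq0 -lt0n N_gt0.
apply/eqP; rewrite eq_le; apply/andP; split; last first.
  apply: bigmax_ub; first exact: bigmax_ge0.
  move=> x; apply: le_trans (bigmax_lb _ [ffun _ => x]).
  rewrite le_eqVlt; apply/orP; left; apply/eqP; rewrite /Pr; apply: eq_bigr => m _.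
  by congr (_ * (_ / _)); congr (_%:R); apply: eq_card => c; rewrite !inE ffunE.
apply: bigmax_ub; first exact: bigmax_ge0.
move=> g.
have e : forall m, #|[set c | consistent c && correct m c (g (view m c))]|%:R / N%:R =
   \sum_w (D w)%:R / N%:R * (#|[set c | consistent c && correct m c (g w)]|%:R / N%:R) :> rat.
  move=> m; rewrite (card_part consistent (view m) (fun c w => correct m c (g w))) natr_sum mulr_suml.
  apply: eq_bigr => w _.
  have -> : (#|[set c | consistent c && (view m c == w) && correct m c (g w)]|)%:R =
     (D w)%:R * (#|[set c | consistent c && correct m c (g w)]|)%:R / N%:R :> rat.
    by apply: (mulIf N0); rewrite divfK // -!natrM hW.
  by field.
have eN : (\sum_w D w = N)%N.
  have -> : N = #|[set c | consistent c && (fun _ _ => true) c (view [ffun => 0] c)]|.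
    by apply: eq_card => c; rewrite !inE andbT.
  rewrite (card_part consistent (view [ffun => 0]) (fun _ _ => true)); apply: eq_bigr => w _; rewrite -(hD [ffun => 0] w).
  by apply: eq_card => c; rewrite !inE andbT.
rewrite /Pr (eq_bigr (fun m => \sum_w mu m * ((D w)%:R / N%:R *
        (#|[set c | consistent c && correct m c (g w)]|%:R / N%:R)))); last first.
  by move=> m _; rewrite e mulr_sumr.
rewrite exchange_big /=.
apply: le_trans (_ : \sum_w (D w)%:R / N%:R * best_blind mu correct <= _).
  apply: ler_sum => w _.
  rewrite (eq_bigr (fun m => (D w)%:R / N%:R * (mu m *
        (#|[set c | consistent c && correct m c (g w)]|%:R / N%:R)))); last first.
    by move=> m _; rewrite mulrCA.
  rewrite -mulr_sumr; apply: ler_wpM2l; first by apply: divr_ge0; apply: ler0n.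
  exact: (bigmax_lb (fun x => Pr mu (fun m c => correct m c x)) (g w)).
by rewrite -mulr_suml -mulr_suml -natr_sum eN mulfV // mul1r.
Qed.
End Gen.

Set Implicit Arguments. Unset Strict Implicit. Unset Printing Implicit Defensive.

Section Proto.
Variables (F : finFieldType) (v t : nat).
Notation coinsT := (coins F v t).
Notation msgsT := {ffun 'I_v -> F}.

Fixpoint originP (c : coinsT) (k : nat) : {perm 'I_v} :=
  if k is k'.+1 then (rho c (inord k') * originP c k')%g else 1%g.

Lemma origin_P c k i : origin c k i = originP c k i.
Proof. by elim: k i => [|k IH] i /=; rewrite ?perm1 // IH permM. Qed.

Definition Ssum (c : coinsT) k (a : 'I_v) := \sum_(j < t.+1) lvl c k a j.
Definition Om (c : coinsT) (k : 'I_t.+1) (a : 'I_v) := \sum_(j < t.+1) om c (k, a, j).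

Lemma S_succ c k a : Ssum c k.+1 a = Om c (inord k) a + Ssum c k (rho c (inord k) a).
Proof. by rewrite /Ssum /Om -big_split. Qed.

Lemma back_S (char2 : 2%N \in [pchar F]) (c : coinsT) m n : (n <= t.+1)%N -> forall i,
  let q := ((originP c (t.+1 - n))^-1)%g (originP c t.+1 i) in
  back c m n q = m i + Ssum c (t.+1 - n) q.
Proof.
elim: n => [|n IH] hn i; set O := originP c t.+1 i.
  by rewrite /= subn0 permK.
have hn' : (n <= t)%N by [].
rewrite subSS /=.
set K := rho c (inord (t - n)).
have e : ((originP c (t.+1 - n))^-1)%g O = (K^-1)%g (((originP c (t - n))^-1)%g O).
  by rewrite (subSn hn') /= invMg permM.
rewrite -e (IH (ltnW hn) i) -/O e (subSn hn') S_succ -/K.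
rewrite permKV /Om -addrA (addrC (\sum_j _)) addrA -addrA; congr (_ + _).
by rewrite -addrA addrr_pchar2 // addr0.
Qed.

Lemma reliable (char2 : 2%N \in [pchar F]) (c : coinsT) m :
  consistent c -> forall i, R_output c m (origin c t.+1 i) = m i.
Proof.
move=> /forallP hc i; rewrite /R_output origin_P.
have := back_S char2 c m (leqnn t.+1) i; rewrite subnn /= invg1 perm1 => ->.
by rewrite /Ssum /= (eqP (hc _)) -addrA addrr_pchar2 // addr0.
Qed.
End Proto.

Set Implicit Arguments. Unset Strict Implicit. Unset Printing Implicit Defensive.

Section Shift.
Variables (F : finFieldType) (v t : nat).
Notation coinsT := (coins F v t).
Notation msgsT := {ffun 'I_v -> F}.

Definition shiftc (j0 : 'I_t.+1) (d : {ffun 'I_v -> F}) (c : coinsT) : coinsT :=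
  ((([ffun a => pad c a + d a],
     [ffun ij : 'I_v * 'I_t.+1 => if ij.2 == j0 then sh c ij + d ij.1 else sh c ij]),
    rho c), om c).

Lemma coins_eq (c c' : coinsT) : pad c = pad c' -> sh c = sh c' -> rho c = rho c' ->
  om c = om c' -> c = c'.
Proof. by case: c => [[[? ?] ?] ?]; case: c' => [[[? ?] ?] ?]; rewrite /pad /sh /rho /om /= => -> -> -> ->. Qed.

Lemma originP_eq (c c' : coinsT) k : rho c' = rho c -> originP c' k = originP c k.
Proof. by move=> e; elim: k => //= k ->; rewrite e. Qed.

Lemma origin_eq (c c' : coinsT) k i : rho c' = rho c -> origin c' k i = origin c k i.
Proof. by move=> e; rewrite !origin_P (originP_eq _ e). Qed.

Lemma shiftcK j0 d (c : coinsT) : shiftc j0 (- d) (shiftc j0 d c) = c.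
Proof.
apply: coins_eq => //; apply/ffunP => x; rewrite /shiftc /pad /sh /= !ffunE.
  by rewrite addrK.
by case: (x.2 == j0); rewrite ?addrK.
Qed.

Lemma lvl_shift j0 d (c : coinsT) k i j :
  lvl (shiftc j0 d c) k i j = lvl c k i j + (if j == j0 then d (origin c k i) else 0).
Proof.
elim: k i => [|k IH] i /=.
  by rewrite /sh /= ffunE /=; case: ifP; rewrite ?addr0.
by rewrite IH addrA.
Qed.

Lemma sum_sh_shift j0 d (c : coinsT) i :
  \sum_(j < t.+1) sh (shiftc j0 d c) (i, j) = \sum_(j < t.+1) sh c (i, j) + d i.
Proof.
rewrite (bigD1 j0) //= [in RHS](bigD1 j0) //= {1}/sh /= ffunE /= eqxx -!addrA (addrC (d i)).
congr (_ + _); congr (_ + _); apply: eq_bigr => j /negbTE nj.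
by rewrite /sh /= ffunE /= nj.
Qed.

Lemma cons_shift j0 d (c : coinsT) : consistent (shiftc j0 d c) = consistent c.
Proof.
apply: eq_forallb => i; rewrite sum_sh_shift {2}/pad /= ffunE.
by rewrite (inj_eq (addIr _)).
Qed.

Lemma sender_pad_shift j0 d (c : coinsT) i :
  sender_pad (shiftc j0 d c) i = sender_pad c i + d (origin c t.+1 i).
Proof.
rewrite /sender_pad (eq_bigr (fun j => lvl c t.+1 i j +
   (if j == j0 then d (origin c t.+1 i) else 0))); last by move=> j _; rewrite lvl_shift.
rewrite big_split /=; congr (_ + _).
by rewrite (bigD1 j0) //= eqxx big1 ?addr0 // => j /negbTE ->.
Qed.

Lemma back_eq (c c' : coinsT) (m m' : msgsT) : rho c' = rho c -> om c' = om c ->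
  (forall i, m' i + sender_pad c' i = m i + sender_pad c i) ->
  forall n p, back c' m' n p = back c m n p.
Proof. by move=> er eo es; elim => [|n IH] p //=; rewrite IH er eo. Qed.

Lemma viewA_srv_shift j0 d (c : coinsT) (s : server t) : s.2 != j0 ->
  viewA_srv (shiftc j0 d c) s = viewA_srv c s.
Proof.
move=> /negbTE ns; rewrite /viewA_srv; congr (_, _, _, _); apply/ffunP => i.
by rewrite !ffunE lvl_shift ns addr0.
Qed.
End Shift.

Set Implicit Arguments. Unset Strict Implicit. Unset Printing Implicit Defensive.

Section Low.
Variables (F : finFieldType) (v t : nat).
Notation coinsT := (coins F v t).
Notation msgsT := {ffun 'I_v -> F}.

Lemma leq_inord n : (@inord t n <= n)%N.
Proof.
case: (ltnP n t.+1) => h; first by rewrite inordK.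
by rewrite /inord /insubd insubN // -leqNgt.
Qed.

Lemma lvl_low (k0 : nat) (c c' : coinsT) : sh c' = sh c ->
  (forall k : 'I_t.+1, (k < k0)%N -> rho c' k = rho c k /\ forall (i : 'I_v) (j : 'I_t.+1), om c' (k, i, j) = om c (k, i, j)) ->
  forall n, (n <= k0)%N -> forall i j, lvl c' n i j = lvl c n i j.
Proof.
move=> es eq; elim => [|n IH] hn i j /=; first by rewrite es.
have [er eo] := eq (inord n) (leq_ltn_trans (leq_inord _) hn).
rewrite er eo IH //; exact: ltnW.
Qed.

Lemma lvl_high (k0 : 'I_t.+1) (c c' : coinsT) :
  (forall i j, lvl c' k0.+1 i j = lvl c k0.+1 i j) ->
  (forall k : 'I_t.+1, (k0 < k)%N -> rho c' k = rho c k /\ forall (i : 'I_v) (j : 'I_t.+1), om c' (k, i, j) = om c (k, i, j)) ->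
  forall n, (k0 < n)%N -> (n <= t.+1)%N -> forall i j, lvl c' n i j = lvl c n i j.
Proof.
move=> e0 eq; elim => [//|n IH] hn hn2 i j.
have [en|ne] := eqVneq n k0; first by rewrite en e0.
have hn' : (k0 < n)%N by rewrite ltn_neqAle eq_sym ne -ltnS.
have hi : inord n = Ordinal hn2 :> 'I_t.+1 by apply: val_inj; rewrite /= inordK.
have hk : (k0 < @inord t n)%N by rewrite hi.
rewrite /=; have [er eo] := eq _ hk.
rewrite er eo IH //; exact: ltnW.
Qed.

Lemma originP_low (k0 : nat) (c c' : coinsT) :
  (forall k : 'I_t.+1, (k < k0)%N -> rho c' k = rho c k) ->
  forall n, (n <= k0)%N -> originP c' n = originP c n.
Proof.
move=> eq; elim => [//|n IH] hn /=.
rewrite eq ?IH //; [exact: ltnW | exact: (leq_ltn_trans (leq_inord _) hn)].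
Qed.

Definition tau (k0 : 'I_t.+1) (c : coinsT) : {perm 'I_v} :=
  (originP c t.+1 * (originP c k0.+1)^-1)%g.

Lemma tau_eq (k0 : 'I_t.+1) (c c' : coinsT) :
  (forall k : 'I_t.+1, (k0 < k)%N -> rho c' k = rho c k) -> tau k0 c' = tau k0 c.
Proof.
move=> eq.
suff : forall n, (k0 < n)%N -> (n <= t.+1)%N ->
  (originP c' n * (originP c' k0.+1)^-1 = originP c n * (originP c k0.+1)^-1)%g.
  by move=> h; apply: h.
elim => [//|n IH] hn hn2.
have [en|ne] := eqVneq n k0; first by rewrite en !mulgV.
have hn' : (k0 < n)%N by rewrite ltn_neqAle eq_sym ne -ltnS.
have hi : inord n = Ordinal hn2 :> 'I_t.+1 by apply: val_inj; rewrite /= inordK.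
by rewrite /= -!mulgA IH ?(ltnW hn2) // hi eq.
Qed.

Lemma origin_tau (k0 : 'I_t.+1) (c : coinsT) i :
  origin c t.+1 i = originP c k0.+1 (tau k0 c i).
Proof. by rewrite origin_P /tau permM permKV. Qed.
End Low.

Set Implicit Arguments. Unset Strict Implicit. Unset Printing Implicit Defensive.

Section Swap.
Variables (F : finFieldType) (v t : nat).
Notation coinsT := (coins F v t).
Notation msgsT := {ffun 'I_v -> F}.
Variables (k0 j0 : 'I_t.+1) (m : msgsT) (x y : 'I_v).

Definition Kn (c : coinsT) : {perm 'I_v} := (tperm (tau k0 c x) (tau k0 c y) * rho c k0)%g.
Definition Zf (c : coinsT) q := back c m (t - k0) q + Ssum c k0.+1 q.
Definition dF (c : coinsT) : {ffun 'I_v -> F} :=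
  [ffun a => Zf c ((Kn c)^-1%g ((originP c k0)^-1%g a)) - Zf c ((rho c k0)^-1%g ((originP c k0)^-1%g a))].
Definition c1 (c : coinsT) := shiftc j0 (dF c) c.
Definition Fm (c : coinsT) : coinsT :=
  ((c1 c).1.1, [ffun k => if k == k0 then Kn c else rho c k],
   [ffun kij : 'I_t.+1 * 'I_v * 'I_t.+1 => if kij.1.1 == k0 then
        lvl c k0.+1 kij.1.2 kij.2 - lvl (c1 c) k0 (Kn c kij.1.2) kij.2 else om c kij]).

Lemma lvl_S (c : coinsT) k i j : lvl c k.+1 i j = om c (inord k, i, j) + lvl c k (rho c (inord k) i) j.
Proof. by []. Qed.

Lemma Fm_rho c k : rho (Fm c) k = if k == k0 then Kn c else rho c k.
Proof. by rewrite /rho /= ffunE. Qed.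
Lemma Fm_om c k i j : om (Fm c) (k, i, j) =
  if k == k0 then lvl c k0.+1 i j - lvl (c1 c) k0 (Kn c i) j else om c (k, i, j).
Proof. by rewrite /om /= ffunE. Qed.
Lemma Fm_sh c : sh (Fm c) = sh (c1 c). Proof. by []. Qed.
Lemma Fm_pad c : pad (Fm c) = pad (c1 c). Proof. by []. Qed.

Lemma ltn_ne (k : 'I_t.+1) : (k < k0)%N -> k != k0.
Proof. by move=> h; apply/eqP => e; rewrite e ltnn in h. Qed.
Lemma gtn_ne (k : 'I_t.+1) : (k0 < k)%N -> k != k0.
Proof. by move=> h; apply/eqP => e; rewrite e ltnn in h. Qed.

Lemma Fm_low c n : (n <= k0)%N -> forall i j, lvl (Fm c) n i j = lvl (c1 c) n i j.
Proof.
apply: lvl_low => // k hk; rewrite Fm_rho (negbTE (ltn_ne hk)); split => // i j.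
by rewrite Fm_om (negbTE (ltn_ne hk)).
Qed.

Lemma Fm_k0 c i j : lvl (Fm c) k0.+1 i j = lvl c k0.+1 i j.
Proof.
rewrite lvl_S inord_val Fm_om Fm_rho eqxx Fm_low //.
by rewrite subrK.
Qed.

Lemma Fm_high c n : (k0 < n)%N -> (n <= t.+1)%N -> forall i j, lvl (Fm c) n i j = lvl c n i j.
Proof.
apply: lvl_high; first exact: Fm_k0.
move=> k hk; rewrite Fm_rho (negbTE (gtn_ne hk)); split => // i j.
by rewrite Fm_om (negbTE (gtn_ne hk)).
Qed.

Lemma Fm_sender_pad c i : sender_pad (Fm c) i = sender_pad c i.
Proof. by apply: eq_bigr => j _; rewrite Fm_high. Qed.

Lemma Fm_back_up c n : (n <= t - k0)%N -> forall p, back (Fm c) m n p = back c m n p.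
Proof.
elim: n => [|n IH] hn p /=; first by rewrite Fm_sender_pad.
have hk : (k0 < @inord t (t - n))%N.
  rewrite inordK; last by rewrite ltnS leq_subr.
  by rewrite ltn_subRL addnC -ltn_subRL.
rewrite Fm_rho (negbTE (gtn_ne hk)) IH; last exact: ltnW; congr (_ + _); apply: eq_bigr => j _.
by rewrite Fm_om (negbTE (gtn_ne hk)).
Qed.

Lemma S_shift d (c : coinsT) k a : Ssum (shiftc j0 d c) k a = Ssum c k a + d (origin c k a).
Proof.
rewrite /Ssum (eq_bigr (fun j => lvl c k a j + (if j == j0 then d (origin c k a) else 0))).
  rewrite big_split /=; congr (_ + _).
  by rewrite (bigD1 j0) //= eqxx big1 ?addr0 // => j /negbTE ->.
by move=> j _; rewrite lvl_shift.
Qed.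

Lemma back_S1 (c : coinsT) n p : back c m n.+1 p =
  back c m n ((rho c (inord (t - n)))^-1%g p) + \sum_(j < t.+1) om c (inord (t - n), (rho c (inord (t - n)))^-1%g p, j).
Proof. by []. Qed.

Lemma om_lvl (c : coinsT) (k : 'I_t.+1) i j : om c (k, i, j) = lvl c k.+1 i j - lvl c k (rho c k i) j.
Proof. by rewrite lvl_S inord_val addrK. Qed.

Lemma Fm_back_k0 c p : back (Fm c) m (t - k0).+1 p = back c m (t - k0).+1 p.
Proof.
have hk : (t - (t - k0))%N = k0 by rewrite subKn // -ltnS.
rewrite !back_S1 hk inord_val Fm_rho eqxx Fm_back_up //.
rewrite (eq_bigr (fun j => lvl c k0.+1 ((Kn c)^-1%g p) j - lvl (c1 c) k0 p j)); last first.
  by move=> j _; rewrite Fm_om eqxx permKV.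
rewrite [in RHS](eq_bigr (fun j => lvl c k0.+1 ((rho c k0)^-1%g p) j - lvl c k0 p j)); last first.
  by move=> j _; rewrite om_lvl permKV.
rewrite !sumrB -!/(Ssum _ _ _) S_shift /dF ffunE origin_P permK /Zf.
ring.
Qed.

Lemma Fm_back_low c n : ((t - k0).+1 <= n)%N -> (n <= t)%N ->
  forall p, back (Fm c) m n p = back c m n p.
Proof.
elim: n => [//|n IH] h1 h2 p.
have [e|ne] := eqVneq n (t - k0)%N; first by rewrite e Fm_back_k0.
have h1' : ((t - k0).+1 <= n)%N by rewrite ltn_neqAle eq_sym ne -ltnS.
have hk : (@inord t (t - n) < k0)%N.
  rewrite inordK; last by rewrite ltnS leq_subr.
  lia.
rewrite !back_S1 Fm_rho (negbTE (ltn_ne hk)) IH //; last exact: ltnW.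
congr (_ + _); apply: eq_bigr => j _.
by rewrite Fm_om (negbTE (ltn_ne hk)).
Qed.

Lemma Fm_originP_low c n : (n <= k0)%N -> originP (Fm c) n = originP c n.
Proof. by apply: originP_low => k hk; rewrite Fm_rho (negbTE (ltn_ne hk)). Qed.

Lemma Fm_tau c : tau k0 (Fm c) = tau k0 c.
Proof. by apply: tau_eq => k hk; rewrite Fm_rho (negbTE (gtn_ne hk)). Qed.

Lemma Fm_origin c : origin (Fm c) t.+1 y = origin c t.+1 x.
Proof.
rewrite !(origin_tau k0) Fm_tau /= inord_val Fm_rho eqxx Fm_originP_low //.
rewrite (permM (Kn c)) (permM (rho c k0)) /Kn permM tpermR. done.
Qed.

Lemma Fm_cons c : consistent (Fm c) = consistent c.
Proof. exact: cons_shift. Qed.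

Lemma Fm_Kn c : Kn (Fm c) = rho c k0.
Proof. by rewrite /Kn Fm_tau Fm_rho eqxx /Kn mulgA tperm2 mul1g. Qed.

Lemma Fm_Z c q : Zf (Fm c) q = Zf c q.
Proof.
rewrite /Zf Fm_back_up //; congr (_ + _).
by apply: eq_bigr => j _; rewrite Fm_k0.
Qed.

Lemma Fm_dF c a : dF (Fm c) a = - dF c a.
Proof.
by rewrite /dF !ffunE !Fm_Z Fm_Kn eqxx Fm_originP_low // opprB.
Qed.

Lemma pad_shift d (c : coinsT) a : pad (shiftc j0 d c) a = pad c a + d a.
Proof. by rewrite /pad /= ffunE. Qed.
Lemma sh_shift d (c : coinsT) a j : sh (shiftc j0 d c) (a, j) =
  if j == j0 then sh c (a, j) + d a else sh c (a, j).
Proof. by rewrite /sh /= ffunE. Qed.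

Lemma FmK c : Fm (Fm c) = c.
Proof.
apply: coins_eq.
- apply/ffunP => a; rewrite Fm_pad /c1 pad_shift Fm_pad pad_shift.
  by rewrite Fm_dF -addrA subrr addr0.
- apply/ffunP => [[a j]]; rewrite Fm_sh /c1 sh_shift Fm_sh sh_shift /=.
  by case: (j == j0); rewrite ?Fm_dF -?addrA ?subrr ?addr0.
- apply/ffunP => k; rewrite Fm_rho Fm_Kn Fm_rho.
  by case: eqP => [->|].
- apply/ffunP => [[[k i] j]]; rewrite Fm_om.
  case: eqP => [ek|nk]; last by rewrite Fm_om; case: eqP.
  subst k; rewrite Fm_Kn Fm_k0 om_lvl; congr (_ - _).
  rewrite /c1 lvl_shift Fm_low // lvl_shift.
  rewrite Fm_dF !origin_P Fm_originP_low //.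
  by case: (j == j0); rewrite ?addr0 // addrK.
Qed.
End Swap.

Set Implicit Arguments. Unset Strict Implicit. Unset Printing Implicit Defensive.

Section Views.
Variables (F : finFieldType) (v t : nat).
Notation coinsT := (coins F v t).
Notation msgsT := {ffun 'I_v -> F}.
Variables (k0 j0 : 'I_t.+1) (m : msgsT) (x y : 'I_v).

Lemma Fm_viewA_srv c (s : server t) : s.1 != k0 -> s.2 != j0 ->
  viewA_srv (Fm k0 j0 m x y c) s = viewA_srv c s.
Proof.
move=> n1 n2; rewrite /viewA_srv Fm_rho (negbTE n1).
congr (_, _, _, _).
- apply/ffunP => i; rewrite !ffunE.
  have [lt|gt] := ltnP s.1 k0.
    rewrite Fm_low; last exact: ltnW.
    by rewrite /c1 lvl_shift (negbTE n2) addr0.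
  have gt' : (k0 < s.1)%N by rewrite ltn_neqAle gt andbT eq_sym.
  by rewrite Fm_high //; exact: ltnW.
- by apply/ffunP => i; rewrite !ffunE /= (negbTE n1).
- by case: (s.2 == ord0) => //; congr Some; apply/ffunP => ij; rewrite !ffunE /= (negbTE n1).
Qed.

Lemma Fm_viewB_srv c (s : server t) : s.1 != k0 ->
  viewB_srv (Fm k0 j0 m x y c) m s = viewB_srv c m s.
Proof.
move=> n1; rewrite /viewB_srv; case: (s.2 == ord0) => //; congr Some.
apply/ffunP => p; rewrite !ffunE.
have [lt|gt] := ltnP s.1 k0.
  have hs := ltn_ord s.1.
  have hk := ltn_ord k0; rewrite Fm_back_low //; lia.
have gt' : (k0 < s.1)%N by rewrite ltn_neqAle gt andbT eq_sym.
have hk := ltn_ord k0; have hs := ltn_ord s.1; rewrite Fm_back_up //; lia.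
Qed.

Lemma Fm_viewA (C : {set server t}) c : (forall s, s \in C -> s.1 != k0 /\ s.2 != j0) ->
  viewA C m (Fm k0 j0 m x y c) = viewA C m c.
Proof.
move=> hC; apply/ffunP => s; rewrite !ffunE; case: ifP => // sC.
by have [n1 n2] := hC s sC; rewrite Fm_viewA_srv.
Qed.

Lemma Fm_viewFull (C : {set server t}) c : (forall s, s \in C -> s.1 != k0 /\ s.2 != j0) ->
  viewFull C m (Fm k0 j0 m x y c) = viewFull C m c.
Proof.
move=> hC; apply/ffunP => s; rewrite !ffunE; case: ifP => // sC.
by have [n1 n2] := hC s sC; rewrite Fm_viewA_srv // Fm_viewB_srv.
Qed.
End Views.

Set Implicit Arguments. Unset Strict Implicit. Unset Printing Implicit Defensive.

Section Final.
Variables (F : finFieldType) (v t : nat).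
Notation coinsT := (coins F v t).
Notation msgsT := {ffun 'I_v -> F}.

Lemma shift_viewA (C : {set server t}) (m : msgsT) j0 d (c : coinsT) :
  (forall s, s \in C -> s.2 != j0) -> viewA C m (shiftc j0 d c) = viewA C m c.
Proof.
move=> hC; apply/ffunP => s; rewrite !ffunE; case: ifP => // sC.
by rewrite viewA_srv_shift // hC.
Qed.

Lemma shift_viewFull (C : {set server t}) (m m' : msgsT) j0 d (c : coinsT) :
  (forall s, s \in C -> s.2 != j0) ->
  (forall i, m' i + sender_pad (shiftc j0 d c) i = m i + sender_pad c i) ->
  viewFull C m' (shiftc j0 d c) = viewFull C m c.
Proof.
move=> hC he; apply/ffunP => s; rewrite !ffunE; case: ifP => // sC.
rewrite viewA_srv_shift ?hC // /viewB_srv; case: (s.2 == ord0) => //.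
by congr (Some (_, Some _)); apply/ffunP => p; rewrite !ffunE (back_eq _ _ he).
Qed.

Lemma full_D (C : {set server t}) j0 (hC : forall s, s \in C -> s.2 != j0) (m m' : msgsT) w :
  #|[set c : coinsT | consistent c && (viewFull C m c == w)]| =
  #|[set c : coinsT | consistent c && (viewFull C m' c == w)]|.
Proof.
pose dd (c : coinsT) : {ffun 'I_v -> F} :=
  [ffun a => m (((originP c t.+1)^-1)%g a) - m' (((originP c t.+1)^-1)%g a)].
apply: (@card_bij _ (fun c => shiftc j0 (dd c) c) (fun c => shiftc j0 (- dd c) c)).
  move=> c /=; have -> : dd (shiftc j0 (dd c) c) = dd c.
    by apply/ffunP => a; rewrite !ffunE (@originP_eq _ _ _ c (shiftc j0 (dd c) c)).
  exact: shiftcK.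
move=> c; rewrite cons_shift (@shift_viewFull C m) // => i.
rewrite sender_pad_shift ffunE origin_P permK; ring.
Qed.

Lemma free_idx (C : {set server t}) (f : server t -> 'I_t.+1) : (#|C| <= t)%N ->
  exists j0, forall s, s \in C -> f s != j0.
Proof.
move=> hC; case: (pickP (fun j => j \notin f @: C)) => [j hj|hn].
  by exists j => s sC; apply: contraNneq hj => <-; apply: imset_f.
have : (#|[set: 'I_t.+1]| <= #|f @: C|)%N.
  by apply: subset_leq_card; apply/subsetP => j _; have := hn j; rewrite /=; case: (j \in f @: C).
rewrite cardsT card_ord => h; have := leq_trans h (leq_trans (leq_imset_card _ _) hC).
by rewrite ltnn.
Qed.
End Final.

Unset Implicit Arguments. Set Strict Implicit. Set Printing Implicit Defensive.

Theorem theorem1 (F : finFieldType) (t v : nat) (char2 : (2%N \in [pchar F])) :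
  (* perfect reliability: R recovers every sender's message *)
  (forall mu : {ffun msgs F v -> rat}, is_dist mu ->
     Pr mu (fun (m : msgs F v) (c : coins F v t) =>
       [forall i : 'I_v, R_output c m (origin c t.+1 i) == m i]) = 1) /\
  (forall (mu : {ffun msgs F v -> rat}), is_dist mu ->
   forall C : {set server t}, (#|C| <= t)%N ->
     (* perfect privacy of the senders' secrets *)
     (forall i : 'I_v,
        best_with mu (viewFull C) (fun m (c : coins F v t) (x : F) => x == m i)
        = best_blind mu (fun m (c : coins F v t) (x : F) => x == m i)) /\
     (* perfect privacy of the pads (phase A) *)
     (forall p : 'I_v,
        best_with mu (viewA C) (fun m (c : coins F v t) (x : F) => x == pad c p)
        = best_blind mu (fun m (c : coins F v t) (x : F) => x == pad c p)) /\
     (* perfect receiver anonymity: which sender received pad p *)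
     (forall p : 'I_v,
        best_with mu (viewA C) (fun m (c : coins F v t) (x : 'I_v) => origin c t.+1 x == p)
        = best_blind mu (fun m (c : coins F v t) (x : 'I_v) => origin c t.+1 x == p)) /\
     (* perfect sender anonymity: which sender sent the message in R's slot p *)
     (forall p : 'I_v,
        best_with mu (viewFull C) (fun m (c : coins F v t) (x : 'I_v) => origin c t.+1 x == p)
        = best_blind mu (fun m (c : coins F v t) (x : 'I_v) => origin c t.+1 x == p))).
Proof.
have N0 : (#|[set c : coins F v t | consistent c]|)%:R != 0 :> rat.
  by rewrite pnatr_eq0 -lt0n N_gt0.
split.
  move=> mu [_ mu1]; rewrite /Pr -[RHS]mu1; apply: eq_bigr => m _.
  rewrite (eq_card (B := [set c : coins F v t | consistent c])); first by rewrite mulfV // mulr1.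
  move=> c; rewrite !inE; case hc: (consistent c) => //=.
  by apply/forallP => i; rewrite reliable.
move=> mu hmu C hC.
have [j0 hj0] := free_idx (fun s : server t => s.2) hC.
have [k0 hk0] := free_idx (fun s : server t => s.1) hC.
have hkj : forall s, s \in C -> s.1 != k0 /\ s.2 != j0 by move=> s sC; split; [exact: hk0|exact: hj0].
set z : {ffun 'I_v -> F} := [ffun => 0].
split.
  move=> i; apply: (best_eq (D := fun w => #|[set c | consistent c && (viewFull C z c == w)]|)) => //.
    by move=> m w; apply: (full_D hj0).
  move=> m w x /=; case: (x == m i).
    rewrite -(full_D hj0 m z w); congr (_ * _)%N.
      by apply: eq_card => c; rewrite !inE andbT.
    by apply: eq_card => c; rewrite !inE andbT.
  have c0 : forall b : coins F v t -> bool, #|[set c | b c && false]| = 0%N.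
    by move=> b; rewrite cardS big1 // => c _; rewrite andbF.
  by rewrite (c0 (fun c => consistent c && (viewFull C m c == w))) (c0 consistent) muln0 mul0n.
split.
  move=> p; apply: (best_eq (D := fun w => #|[set c | consistent c && (viewA C z c == w)]|)) => //.
  move=> m w x.
  apply: (@sym_count _ _ _ consistent (viewA C m) (fun c x => x == pad c p) (fun c => pad c p)) => // x1 y1.
  pose d : {ffun 'I_v -> F} := [ffun a => if a == p then y1 - x1 else 0].
  exists (shiftc j0 d), (shiftc j0 (- d)); split; first exact: shiftcK.
  split; first by move=> c; rewrite cons_shift.
  move=> c _; rewrite shift_viewA //; split => //.
  rewrite pad_shift ffunE eqxx.
  apply/eqP/eqP => [h|->]; last by ring.
  apply/eqP; rewrite -subr_eq0; apply/eqP.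
  rewrite (_ : x1 - pad c p = y1 - (pad c p + (y1 - x1))); first by rewrite -h subrr.
  ring.
split.
  move=> p; apply: (best_eq (D := fun w => #|[set c | consistent c && (viewA C z c == w)]|)) => //.
  move=> m w x.
  apply: (@sym_count _ _ _ consistent (viewA C m) (fun c x => origin c t.+1 x == p)
           (fun c => ((originP c t.+1)^-1)%g p)).
    move=> c _ x1; rewrite origin_P; apply/eqP/eqP => [<-|->]; [by rewrite permK | by rewrite permKV].
  move=> x1 y1; exists (Fm k0 j0 z x1 y1), (Fm k0 j0 z x1 y1); split; first exact: FmK.
  split; first exact: Fm_cons.
  move=> c _; split; last by rewrite Fm_origin.
  exact: Fm_viewA.
move=> p; apply: (best_eq (D := fun w => #|[set c | consistent c && (viewFull C z c == w)]|)) => //.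
  by move=> m w; apply: (full_D hj0).
move=> m w x; rewrite -(full_D hj0 m z w).
apply: (@sym_count _ _ _ consistent (viewFull C m) (fun c x => origin c t.+1 x == p)
         (fun c => ((originP c t.+1)^-1)%g p)).
  move=> c _ x1; rewrite origin_P; apply/eqP/eqP => [<-|->]; [by rewrite permK | by rewrite permKV].
move=> x1 y1; exists (Fm k0 j0 m x1 y1), (Fm k0 j0 m x1 y1); split; first exact: FmK.
split; first exact: Fm_cons.
move=> c _; split; last by rewrite Fm_origin.
exact: Fm_viewFull.
Qed.
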